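(* Let $m,v>0$ and $s\geq 0$. Let $\mathfrak{n}$ be the five-dimensional real Lie algebra with basis $\{E_1,\dots,E_5\}$ whose only non-vanishing brackets (up to antisymmetry) are $$[E_1,E_2]=mE_3+sE_4,\qquad [E_1,E_3]=vE_4,\qquad [E_2,E_3]=vE_5.$$ Equip the corresponding simply connected nilpotent Lie group with the left-invariant Riemannian metric for which $\{E_1,\dots,E_5\}$ is orthonormal. Then this metric is an algebraic Ricci soliton if and only if $$s=0,\qquad v=\tfrac{\sqrt3}{2}m.$$ In that case $$c=-\tfrac32m^2,\qquad D=\mathrm{diag}\big(\tfrac58m^2,\tfrac58m^2,\tfrac54m^2,\tfrac{15}8m^2,\tfrac{15}8m^2\big),$$ where $D$ is written as a matrix with respect to the basis $\{E_1,\dots,E_5\}$.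
   Context: Let $G$ be a Lie group with Lie algebra $\mathfrak{g}$ and let $g$ be a left-invariant Riemannian metric on $G$. Let $\mathrm{Ric}$ denote the $(1,1)$ Ricci tensor of $g$, viewed as a linear endomorphism of $\mathfrak{g}$. The metric $g$ is an algebraic Ricci soliton if there are a real number $c$ and a derivation $D$ of $\mathfrak{g}$ such that $\mathrm{Ric}=c\,\mathrm{Id}+D$. The notation $\mathrm{diag}(a_1,\dots,a_5)$ denotes the diagonal matrix with these entries. *)

(* Defs.v *)
From HB Require Import structures.
From mathcomp Require Import all_boot all_order all_algebra.
Set Implicit Arguments. Unset Strict Implicit. Unset Printing Implicit Defensive.
Import Order.TTheory GRing.Theory Num.Theory.
Local Open Scope ring_scope.

(* A real Lie algebra of dimension n presented in a basis E_0..E_(n-1) by its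
   structure constants: c i j k = k-th coordinate of [E_i, E_j].
   Vectors are row vectors 'rV_n (coordinates in the basis E);
   linear endomorphisms are matrices acting on the right: f(x) = x *m A,
   so row j of A is the coordinate vector of f(E_j). *)
Definition structc (R : nzRingType) (n : nat) := 'I_n -> 'I_n -> 'I_n -> R.

Definition bracket (R : nzRingType) n (c : structc R n) (x y : 'rV[R]_n) : 'rV[R]_n :=
  \row_k \sum_i \sum_j x 0 i * y 0 j * c i j k.

Definition is_derivation (R : nzRingType) n (c : structc R n) (D : 'M[R]_n) : Prop :=
  forall x y : 'rV[R]_n,
    bracket c x y *m D = bracket c (x *m D) y + bracket c x (y *m D).

(* Left-invariant metric for which E is orthonormal.  Levi-Civita connection via
   the Koszul formula: 2 g(nabla_{E_i} E_j, E_k) = g([E_i,E_j],E_k) - g([E_j,E_k],E_i)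
   + g([E_k,E_i],E_j).  nabla c i is the matrix of Y |-> nabla_{E_i} Y. *)
Definition nabla (R : fieldType) n (c : structc R n) (i : 'I_n) : 'M[R]_n :=
  \matrix_(j, k) ((c i j k - c j k i + c k i j) / 2%:R).

(* Curvature R(X,Y) = nabla_X nabla_Y - nabla_Y nabla_X - nabla_[X,Y];
   curv c i j is the matrix of Z |-> R(E_i,E_j) Z (row convention). *)
Definition curv (R : fieldType) n (c : structc R n) (i j : 'I_n) : 'M[R]_n :=
  nabla c j *m nabla c i - nabla c i *m nabla c j - \sum_l c i j l *: nabla c l.

(* Ricci tensor ric(Y,Z) = trace(X |-> R(X,Y)Z); since E is orthonormal the
   (1,1) Ricci endomorphism has matrix (ric(E_j,E_k))_{j,k}. *)
Definition ricci (R : fieldType) n (c : structc R n) : 'M[R]_n :=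
  \matrix_(j, k) \sum_i curv c i j k i.

Definition soliton_pair (R : fieldType) n (c : structc R n) (c0 : R) (D : 'M[R]_n) : Prop :=
  is_derivation c D /\ ricci c = c0%:M + D.

Definition alg_ricci_soliton (R : fieldType) n (c : structc R n) : Prop :=
  exists c0 D, soliton_pair c c0 D.

(* The 5-dim nilpotent algebra: basis E_1..E_5 is indexed 0..4.
   [E1,E2] = m E3 + s E4, [E1,E3] = v E4, [E2,E3] = v E5. *)
Definition nil5 (R : nzRingType) (m s v : R) : structc R 5 :=
  fun i j k =>
    match nat_of_ord i, nat_of_ord j, nat_of_ord k with
    | 0, 1, 2 => m | 0, 1, 3 => s | 1, 0, 2 => - m | 1, 0, 3 => - s
    | 0, 2, 3 => v | 2, 0, 3 => - v
    | 1, 2, 4 => v | 2, 1, 4 => - v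
    | _, _, _ => 0
    end.

Definition diag5 (R : nzRingType) (a b c d e : R) : 'M[R]_5 :=
  diag_mx (\row_(i < 5) nth 0 [:: a; b; c; d; e] i).

(* Main.v *)
Require Import Defs.
From HB Require Import structures.
From mathcomp Require Import all_boot all_order all_algebra ring.
Set Implicit Arguments. Unset Strict Implicit.
Import Order.TTheory GRing.Theory Num.Theory.
Local Open Scope ring_scope.

Lemma bracketE_r (R : nzRingType) n (c : structc R n) x b :
  bracket c x (delta_mx 0 b) = \row_k \sum_i x 0 i * c i b k.
Proof.
apply/matrixP => i k; rewrite !mxE; apply: eq_bigr => i' _.
rewrite (bigD1 b) //= big1 ?addr0; first by rewrite !mxE !eqxx mulr1.
by move=> j /negPf hj; rewrite !mxE hj andbF mulr0 mul0r.
Qed.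

Lemma bracketE_l (R : nzRingType) n (c : structc R n) a y :
  bracket c (delta_mx 0 a) y = \row_k \sum_j y 0 j * c a j k.
Proof.
apply/matrixP => i k; rewrite !mxE (bigD1 a) //=.
rewrite [X in _ + X]big1 ?addr0.
  by apply: eq_bigr => j _; rewrite !mxE !eqxx mul1r.
by move=> i' /negPf hi; apply: big1 => j _; rewrite !mxE hi andbF !mul0r.
Qed.

Lemma bracket_dd (R : nzRingType) n (c : structc R n) a b :
  bracket c (delta_mx 0 a) (delta_mx 0 b) = \row_k c a b k.
Proof.
rewrite bracketE_l; apply/matrixP => i k; rewrite !mxE (bigD1 b) //=.
rewrite [X in _ + X]big1 ?addr0; first by rewrite !mxE !eqxx mul1r.
by move=> j /negPf hj; rewrite !mxE hj andbF mul0r.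
Qed.

Lemma deriv_basis (R : nzRingType) n (c : structc R n) D a b k :
  is_derivation c D ->
  \sum_l c a b l * D l k = \sum_i D a i * c i b k + \sum_j D b j * c a j k.
Proof.
move=> h; have := congr1 (fun M : 'rV_n => M 0 k) (h (delta_mx 0 a) (delta_mx 0 b)).
rewrite /= bracket_dd -!rowE bracketE_l bracketE_r !mxE => e.
rewrite (eq_bigr (fun j => (\row_k0 c a b k0) 0 j * D j k)); last by move=> j _; rewrite mxE.
rewrite e; congr (_ + _); apply: eq_bigr => i _; by rewrite mxE.
Qed.

Lemma deriv_diag (R : rcfType) (m v d1 d2 d3 d4 d5 : R) :
  d3 = d1 + d2 -> d4 = d1 + d3 -> d5 = d2 + d3 ->
  is_derivation (nil5 m 0 v) (diag5 d1 d2 d3 d4 d5).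
Proof.
move=> h3 h4 h5 x y; apply/matrixP => i k.
rewrite /diag5 !mul_mx_diag /bracket !mxE.
case: k => [[|[|[|[|[|k]]]]] Hk] //=.
all: rewrite !(mxE, big_ord_recl, big_ord0) /= /nil5 /=.
all: rewrite ?h5 ?h4 ?h3; ring.
Qed.

Definition ricE (R : rcfType) (m s v : R) (j k : 'I_5) : R :=
  match nat_of_ord j, nat_of_ord k with
  | 0, 0 => -(m^+2 + s^+2 + v^+2)/2%:R
  | 1, 1 => -(m^+2 + s^+2 + v^+2)/2%:R
  | 1, 2 => -(s*v)/2%:R
  | 2, 1 => -(s*v)/2%:R
  | 2, 2 => m^+2/2%:R - v^+2
  | 2, 3 => m*s/2%:R
  | 3, 2 => m*s/2%:R
  | 3, 3 => (s^+2+v^+2)/2%:R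
  | 4, 4 => v^+2/2%:R
  | _, _ => 0
  end.

Lemma ric_entries (R : rcfType) (m s v : R) j k :
  ricci (nil5 m s v) j k = ricE m s v j k.
Proof.
rewrite /ricci mxE big_ord_recl /curv !mxE.
rewrite !(summxE, mxE, big_ord_recl, big_ord0) /=.
case: j => [[|[|[|[|[|j]]]]] Hj] //; case: k => [[|[|[|[|[|k]]]]] Hk] //=.
all: rewrite /ricE /nil5 /=.
all: field.
all: done.

Qed.

Definition ricmat (R : rcfType) (m s v : R) : 'M[R]_5 := \matrix_(j, k) ricE m s v j k.

Lemma ric_mat (R : rcfType) (m s v : R) : ricci (nil5 m s v) = ricmat m s v.
Proof. by apply/matrixP => j k; rewrite ric_entries mxE. Qed.

Lemma key (R : rcfType) (m s v c0 : R) D : 0 < m -> 0 < v -> 0 <= s ->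
  soliton_pair (nil5 m s v) c0 D ->
  [/\ s = 0, c0 = - (3%:R / 2%:R) * m ^+ 2, v ^+ 2 = 3%:R / 4%:R * m ^+ 2 & D = ricmat m s v - c0%:M].
Proof.
move=> hm hv hs [hd hr].
have hD : D = ricmat m s v - c0%:M by rewrite -ric_mat hr addrC addKr.
have e1 := deriv_basis 0 1 1 hd.
have e2 := deriv_basis 0 1 2 hd.
have e3 := deriv_basis 0 2 3 hd.
rewrite hD in e1 e2 e3.
rewrite !big_ord_recl !big_ord0 /= !mxE /ricE /nil5 /= in e1 e2 e3.
rewrite !(mul0r, mulr0, addr0, add0r, mulr0n, mulr1n, subr0, oppr0) in e1.
have s0 : s = 0.
  move/eqP: e1; rewrite mulf_eq0 (gt_eqF hm) /= mulf_eq0 invr_eq0 pnatr_eq0 orbF.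
  by rewrite oppr_eq0 mulf_eq0 (gt_eqF hv) orbF => /eqP.
subst s.
have E2 : m * (c0 + 3%:R / 2%:R * m ^+ 2) = 0.
  by move/eqP: e2; rewrite -subr_eq0 => /eqP e2; rewrite -[RHS]e2; field.
have E3 : v * (c0 + 2%:R * v ^+ 2) = 0.
  by move/eqP: e3; rewrite -subr_eq0 => /eqP e3; rewrite -[RHS]e3; field.
move/eqP: E2; rewrite mulf_eq0 (gt_eqF hm) /= addr_eq0 => /eqP hc.
move/eqP: E3; rewrite mulf_eq0 (gt_eqF hv) /= addr_eq0 => /eqP hc'.
split => //.
  by rewrite hc; ring.
have : 2%:R * v ^+ 2 = 3%:R / 2%:R * m ^+ 2 by rewrite -[LHS]opprK -hc' hc opprK.
move=> h; apply: (@mulfI _ 2%:R); first by rewrite pnatr_eq0.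
by rewrite h; field.
Qed.

Lemma v_of (R : rcfType) (m v : R) : 0 < m -> 0 < v ->
  (v ^+ 2 = 3%:R / 4%:R * m ^+ 2 <-> v = Num.sqrt 3%:R / 2%:R * m).
Proof.
move=> hm hv.
have e : (Num.sqrt 3%:R / 2%:R * m) ^+ 2 = 3%:R / 4%:R * m ^+ 2.
  by rewrite exprMn expr_div_n sqr_sqrtr ?ler0n //; field.
split; last by move=> ->.
move=> h; apply/eqP.
have hpos : 0 <= Num.sqrt 3%:R / 2%:R * m.
  by apply: mulr_ge0; [apply: divr_ge0; [exact: sqrtr_ge0 | exact: ler0n] | exact: ltW].
by rewrite -(@eqrXn2 _ 2) // ?e ?h //; exact: ltW.
Qed.

Lemma D_of (R : rcfType) (m v c0 : R) :
  v ^+ 2 = 3%:R / 4%:R * m ^+ 2 -> c0 = - (3%:R / 2%:R) * m ^+ 2 ->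
  ricmat m 0 v - c0%:M = diag5 (5%:R / 8%:R * m ^+ 2) (5%:R / 8%:R * m ^+ 2) (5%:R / 4%:R * m ^+ 2)
                  (15%:R / 8%:R * m ^+ 2) (15%:R / 8%:R * m ^+ 2).
Proof.
move=> hv hc; rewrite hc; apply/matrixP => j k; rewrite /diag5 !mxE.
case: j => [[|[|[|[|[|j]]]]] Hj] //; case: k => [[|[|[|[|[|k]]]]] Hk] //=.
all: rewrite /ricE /= ?hv; field.
all: done.
Qed.

Lemma sol_of (R : rcfType) (m v c0 : R) D :
  v ^+ 2 = 3%:R / 4%:R * m ^+ 2 -> c0 = - (3%:R / 2%:R) * m ^+ 2 ->
  D = diag5 (5%:R / 8%:R * m ^+ 2) (5%:R / 8%:R * m ^+ 2) (5%:R / 4%:R * m ^+ 2)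
                  (15%:R / 8%:R * m ^+ 2) (15%:R / 8%:R * m ^+ 2) ->
  soliton_pair (nil5 m 0 v) c0 D.
Proof.
move=> hv hc hD; split.
  by rewrite hD; apply: deriv_diag; field.
by rewrite hD -(D_of hv hc) ric_mat addrC subrK.
Qed.

Theorem mainTheorem10 (R : rcfType) (m v s : R) :
  0 < m -> 0 < v -> 0 <= s ->
  (alg_ricci_soliton (nil5 m s v) <-> (s = 0 /\ v = Num.sqrt 3%:R / 2%:R * m)) /\
  (s = 0 /\ v = Num.sqrt 3%:R / 2%:R * m ->
     forall (c0 : R) (D : 'M[R]_5),
       soliton_pair (nil5 m s v) c0 D <->
       (c0 = - (3%:R / 2%:R) * m ^+ 2 /\
        D = diag5 (5%:R / 8%:R * m ^+ 2) (5%:R / 8%:R * m ^+ 2) (5%:R / 4%:R * m ^+ 2)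
                  (15%:R / 8%:R * m ^+ 2) (15%:R / 8%:R * m ^+ 2))).
Proof.
move=> hm hv hs; split.
  split.
    case=> c0 [D h]; have [s0 _ hv2 _] := key hm hv hs h.
    by split => //; apply/(v_of hm hv).
  case=> s0 /(v_of hm hv) hv2; subst s.
  by exists (- (3%:R / 2%:R) * m ^+ 2); eexists; apply: sol_of hv2 erefl erefl.
case=> s0 /(v_of hm hv) hv2; subst s => c0 D; split.
  move=> h; have [_ hc _ hD] := key hm hv hs h.
  by split => //; rewrite hD (D_of hv2 hc).
by case=> hc hD; apply: sol_of.
Qed.
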